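(* Let $P:\mathcal V\to\{\mathtt{true},\mathtt{false}\}$ and $PA:\mathcal A\to\{\mathtt{true},\mathtt{false}\}$ be labelings, $c$ a command, and $\rho_1,\rho_2,\mu_1,\mu_2$ scalar and array states. Assume: (1) $\mathtt b\notin\mathrm{UsedVars}(c)$ and $\rho_1(\mathtt b)=\rho_2(\mathtt b)=0$; (2) $|a|_{\mu_1}>0$ and $|a|_{\mu_2}>0$ for every array $a$; (3) $P;PA\vdash_{\mathtt{true}} c$ (IFC well-typed), $\rho_1\sim_P\rho_2$ and $\mu_1\sim_{PA}\mu_2$; (4) $\langle c,\rho_1,\mu_1\rangle\approx\langle c,\rho_2,\mu_2\rangle$. Then $\langle \mathrm{FiSLH}_P(c),\rho_1,\mu_1,\mathtt{false}\rangle\approx_s\langle \mathrm{FiSLH}_P(c),\rho_2,\mu_2,\mathtt{false}\rangle$.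
   Context: Language AWhile: scalar variables $X\in\mathcal V$, array names $a\in\mathcal A$. Arithmetic expressions $e::=n\ (n\in\mathbb N)\mid X\mid \mathrm{op}_{\mathbb N}(e,\dots,e)\mid be\,?\,e_1:e_2$; boolean expressions $be::=\mathtt{true}\mid\mathtt{false}\mid\mathrm{cmp}(e,e)\mid\mathrm{op}_{\mathbb B}(be,\dots,be)$; commands $c::=\mathtt{skip}\mid X:=e\mid c_1;c_2\mid \mathtt{if}\ be\ \mathtt{then}\ c_1\ \mathtt{else}\ c_2\mid\mathtt{while}\ be\ \mathtt{do}\ c\mid X\leftarrow a[e]\mid a[e]\leftarrow e'$. A scalar state is $\rho:\mathcal V\to\mathbb N$; an array state $\mu$ gives each array $a$ a size $|a|_\mu$ and values $\mu(a)[i]$ for $0\le i<|a|_\mu$. $[\![e]\!]_\rho,[\![be]\!]_\rho$ denote the usual pure evaluation (the conditional expression produces no observation). $\rho[X\mapsto v]$, $\mu[a[i]\mapsto v]$ are updates. $\mathrm{UsedVars}(c)$ is the set of scalar variables occurring in $c$. A distinguished scalar variable $\mathtt b$ is reserved as misspeculation flag. Sequential semantics: steps $\langle c,\rho,\mu\rangle\xrightarrow{o}\langle c',\rho',\mu'\rangle$, $o$ an observation $\mathrm{branch}(v)$, $\mathrm{read}(a,i)$, $\mathrm{write}(a,i)$, or none. Rules: $X:=e\to\mathtt{skip}$ with $\rho[X\mapsto[\![e]\!]_\rho]$, no obs; if $c_1\xrightarrow{o}c_1'$ then $c_1;c_2\xrightarrow{o}c_1';c_2$; $\mathtt{skip};c\to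 c$, no obs; $\mathtt{if}\ be\ \mathtt{then}\ c_{\mathtt{true}}\ \mathtt{else}\ c_{\mathtt{false}}\to c_{v}$ with $v=[\![be]\!]_\rho$, obs $\mathrm{branch}(v)$; $\mathtt{while}\ be\ \mathtt{do}\ c\to\mathtt{if}\ be\ \mathtt{then}\ (c;\mathtt{while}\ be\ \mathtt{do}\ c)\ \mathtt{else}\ \mathtt{skip}$, no obs; $X\leftarrow a[ie]\to\mathtt{skip}$ with $\rho[X\mapsto\mu(a)[i]]$, obs $\mathrm{read}(a,i)$, where $i=[\![ie]\!]_\rho<|a|_\mu$; $a[ie]\leftarrow e\to\mathtt{skip}$ with $\mu[a[i]\mapsto[\![e]\!]_\rho]$, obs $\mathrm{write}(a,i)$, where $i=[\![ie]\!]_\rho<|a|_\mu$. $\xrightarrow{O}{}^*$ is the reflexive-transitive closure, $O$ the list of produced observations. Speculative semantics: configurations $\langle c,\rho,\mu,\beta\rangle$ with boolean misspeculation flag $\beta$; steps $\xrightarrow[d]{o}$ with optional directive $d\in\{\mathit{step},\mathit{force},\mathrm{load}(a',j),\mathrm{store}(a',j)\}$. Assignment, sequence, skip and while rules are as sequentially, keep $\beta$ and use no directive. Conditional: with $\mathit{step}$ go to $c_v$, $v=[\![be]\!]_\rho$, flag unchanged, obs $\mathrm{branch}(v)$; with $\mathit{force}$ go to $c_{\neg v}$, flag set to $\mathtt{true}$, obs $\mathrm{branch}(v)$. Read/write with $\mathit{step}$: as sequentially (requires $i<|a|_\mu$), flag unchanged. Read with $\mathrm{load}(a',j)$: only if $\beta=\mathtt{true}$,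 $i=[\![ie]\!]_\rho\ge|a|_\mu$, $j<|a'|_\mu$; sets $X$ to $\mu(a')[j]$, obs $\mathrm{read}(a,i)$. Write with $\mathrm{store}(a',j)$: only if $\beta=\mathtt{true}$, $i\ge|a|_\mu$, $j<|a'|_\mu$; sets $\mu[a'[j]\mapsto[\![e]\!]_\rho]$, obs $\mathrm{write}(a,i)$. Multi-step $\xrightarrow[D]{O}{}^*$ with $D$ the list of directives. Observational equivalences: $\langle c_1,\rho_1,\mu_1\rangle\approx\langle c_2,\rho_2,\mu_2\rangle$ iff for all $O_1,O_2$ such that $\langle c_k,\rho_k,\mu_k\rangle\xrightarrow{O_k}{}^*$ some configuration ($k=1,2$), one of $O_1,O_2$ is a prefix of the other. $\langle c_1,\rho_1,\mu_1,\beta_1\rangle\approx_s\langle c_2,\rho_2,\mu_2,\beta_2\rangle$ iff for all $D,O_1,O_2$, if $\langle c_k,\rho_k,\mu_k,\beta_k\rangle\xrightarrow[D]{O_k}{}^*$ some configuration ($k=1,2$) then $O_1=O_2$. Labels: booleans, $\mathtt{true}$=public, $\mathtt{false}$=secret; $\ell_1\sqsubseteq\ell_2$ iff $\ell_2=\mathtt{true}\Rightarrow\ell_1=\mathtt{true}$; $\ell_1\sqcup\ell_2=\ell_1\wedge\ell_2$. For $P:\mathcal V\to$ labels, $P(e)$ and $P(be)$ are public iff every scalar variable occurring in the expression is public. $\rho_1\sim_P\rho_2$ iff $\rho_1(X)=\rho_2(X)$ whenever $P(X)=\mathtt{true}$; $\mu_1\sim_{PA}\mu_2$ iff for all $a$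 with $PA(a)=\mathtt{true}$, $|a|_{\mu_1}=|a|_{\mu_2}$ and contents agree. IFC typing $P;PA\vdash_{pc}c$: $\mathtt{skip}$ always; $X:=e$ if $pc\sqcup P(e)\sqsubseteq P(X)$; $c_1;c_2$ if both typed under $pc$; $\mathtt{if}\ be\ \mathtt{then}\ c_1\ \mathtt{else}\ c_2$ if $c_1,c_2$ typed under $pc\sqcup P(be)$; $\mathtt{while}\ be\ \mathtt{do}\ c$ if $c$ typed under $pc\sqcup P(be)$; $X\leftarrow a[i]$ if $pc\sqcup P(i)\sqcup PA(a)\sqsubseteq P(X)$; $a[i]\leftarrow e$ if $pc\sqcup P(i)\sqcup P(e)\sqsubseteq PA(a)$. Index-SLH recipe with parameters $B(be)$, $R(X,i)$, $W(i,e)$: $[\![\mathtt{skip}]\!]=\mathtt{skip}$; $[\![X:=e]\!]=X:=e$; $[\![c_1;c_2]\!]=[\![c_1]\!];[\![c_2]\!]$; $[\![\mathtt{if}\ be\ \mathtt{then}\ c_1\ \mathtt{else}\ c_2]\!]=\mathtt{if}\ B(be)\ \mathtt{then}\ (\mathtt b:=B(be)\,?\,\mathtt b:1;[\![c_1]\!])\ \mathtt{else}\ (\mathtt b:=B(be)\,?\,1:\mathtt b;[\![c_2]\!])$; $[\![\mathtt{while}\ be\ \mathtt{do}\ c]\!]=(\mathtt{while}\ B(be)\ \mathtt{do}\ (\mathtt b:=B(be)\,?\,\mathtt b:1;[\![c]\!]));\ \mathtt b:=B(be)\,?\,1:\mathtt b$; $[\![X\leftarrow a[i]]\!]=X\leftarrow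 a[R(X,i)]$; $[\![a[i]\leftarrow e]\!]=a[W(i,e)]\leftarrow e$. Write $m(i)=(\mathtt b==1)\,?\,0:i$. $\mathrm{FiSLH}_P$ is the instance with $B(be)=(\mathtt b==0\ \&\&\ be)$ if $P(be)=\mathtt{false}$ and $be$ otherwise; $R(X,i)=m(i)$ if $P(X)=\mathtt{true}$ or $P(i)=\mathtt{false}$, else $i$; $W(i,e)=m(i)$ if $P(e)=\mathtt{false}$ or $P(i)=\mathtt{false}$, else $i$. *)

(* Defs.v *)
From Stdlib Require Import String List Bool Arith.
Import ListNotations.
Open Scope list_scope.

Definition var := string.
Definition arr := string.

Definition msf : var := "b"%string.

Inductive aexp : Type :=
| ANum (n : nat)
| AId (x : var)
| ABin (op : nat -> nat -> nat) (e1 e2 : aexp)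
| ACTIf (be : bexp) (e1 e2 : aexp)
with bexp : Type :=
| BTrue
| BFalse
| BCmp (cmp : nat -> nat -> bool) (e1 e2 : aexp)
| BNot (be : bexp)
| BBin (op : bool -> bool -> bool) (be1 be2 : bexp).

Inductive com : Type :=
| Skip
| Asgn (x : var) (e : aexp)
| Seq (c1 c2 : com)
| If (be : bexp) (c1 c2 : com)
| While (be : bexp) (c : com)
| ARead (x : var) (a : arr) (i : aexp)
| AWrite (a : arr) (i : aexp) (e : aexp).

Definition state := var -> nat.
Definition astate := arr -> list nat.       (* mu: |a| = length (mu a), mu(a)[i] = nth i (mu a) 0 *)

Definition upd (rho : state) (x : var) (v : nat) : state :=
  fun y => if String.eqb x y then v else rho y.

Fixpoint list_upd (l : list nat) (i : nat) (v : nat) : list nat :=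
  match l, i with
  | [], _ => []
  | _ :: t, 0 => v :: t
  | h :: t, S i' => h :: list_upd t i' v
  end.

Definition aupd (mu : astate) (a : arr) (i : nat) (v : nat) : astate :=
  fun b => if String.eqb a b then list_upd (mu a) i v else mu b.

Fixpoint aeval (rho : state) (e : aexp) : nat :=
  match e with
  | ANum n => n
  | AId x => rho x
  | ABin op e1 e2 => op (aeval rho e1) (aeval rho e2)
  | ACTIf be e1 e2 => if beval rho be then aeval rho e1 else aeval rho e2
  end
with beval (rho : state) (be : bexp) : bool :=
  match be with
  | BTrue => true
  | BFalse => false
  | BCmp cmp e1 e2 => cmp (aeval rho e1) (aeval rho e2)
  | BNot b1 => negb (beval rho b1)
  | BBin op b1 b2 => op (beval rho b1) (beval rho b2)
  end.

Fixpoint avars (e : aexp) : list var :=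
  match e with
  | ANum _ => []
  | AId x => [x]
  | ABin _ e1 e2 => avars e1 ++ avars e2
  | ACTIf be e1 e2 => bvars be ++ avars e1 ++ avars e2
  end
with bvars (be : bexp) : list var :=
  match be with
  | BTrue | BFalse => []
  | BCmp _ e1 e2 => avars e1 ++ avars e2
  | BNot b1 => bvars b1
  | BBin _ b1 b2 => bvars b1 ++ bvars b2
  end.

Fixpoint used_vars (c : com) : list var :=
  match c with
  | Skip => []
  | Asgn x e => x :: avars e
  | Seq c1 c2 => used_vars c1 ++ used_vars c2
  | If be c1 c2 => bvars be ++ used_vars c1 ++ used_vars c2
  | While be c => bvars be ++ used_vars c
  | ARead x _ i => x :: avars i
  | AWrite _ i e => avars i ++ avars e
  end.

Inductive observation : Type :=
| OBranch (v : bool)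
| ORead (a : arr) (i : nat)
| OWrite (a : arr) (i : nat).

Inductive direction : Type :=
| DStep
| DForce
| DLoad (a : arr) (j : nat)
| DStore (a : arr) (j : nat).

(* the observation list of a single step is [] (no obs) or [o] *)
Inductive seq_step : com -> state -> astate -> list observation ->
                     com -> state -> astate -> Prop :=
| SS_Asgn x e rho mu :
    seq_step (Asgn x e) rho mu [] Skip (upd rho x (aeval rho e)) mu
| SS_Seq c1 c1' c2 rho mu os rho' mu' :
    seq_step c1 rho mu os c1' rho' mu' ->
    seq_step (Seq c1 c2) rho mu os (Seq c1' c2) rho' mu'
| SS_SeqSkip c rho mu :
    seq_step (Seq Skip c) rho mu [] c rho mu
| SS_If be c1 c2 rho mu :
    seq_step (If be c1 c2) rho mu [OBranch (beval rho be)]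
             (if beval rho be then c1 else c2) rho mu
| SS_While be c rho mu :
    seq_step (While be c) rho mu [] (If be (Seq c (While be c)) Skip) rho mu
| SS_ARead x a ie i rho mu :
    i = aeval rho ie -> i < length (mu a) ->
    seq_step (ARead x a ie) rho mu [ORead a i] Skip
             (upd rho x (nth i (mu a) 0)) mu
| SS_AWrite a ie e i rho mu :
    i = aeval rho ie -> i < length (mu a) ->
    seq_step (AWrite a ie e) rho mu [OWrite a i] Skip
             rho (aupd mu a i (aeval rho e)).

Inductive multi_seq : com -> state -> astate -> list observation ->
                      com -> state -> astate -> Prop :=
| MS_Refl c rho mu : multi_seq c rho mu [] c rho mu
| MS_Trans c1 rho1 mu1 os1 c2 rho2 mu2 os2 c3 rho3 mu3 :
    seq_step c1 rho1 mu1 os1 c2 rho2 mu2 ->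
    multi_seq c2 rho2 mu2 os2 c3 rho3 mu3 ->
    multi_seq c1 rho1 mu1 (os1 ++ os2) c3 rho3 mu3.

(* the directive list of a single step is [] (no directive) or [d] *)
Inductive spec_step : com -> state -> astate -> bool -> list direction ->
                      list observation -> com -> state -> astate -> bool -> Prop :=
| SP_Asgn x e rho mu bt :
    spec_step (Asgn x e) rho mu bt [] [] Skip (upd rho x (aeval rho e)) mu bt
| SP_Seq c1 c1' c2 rho mu bt ds os rho' mu' bt' :
    spec_step c1 rho mu bt ds os c1' rho' mu' bt' ->
    spec_step (Seq c1 c2) rho mu bt ds os (Seq c1' c2) rho' mu' bt'
| SP_SeqSkip c rho mu bt :
    spec_step (Seq Skip c) rho mu bt [] [] c rho mu bt
| SP_If be c1 c2 rho mu bt :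
    spec_step (If be c1 c2) rho mu bt [DStep] [OBranch (beval rho be)]
              (if beval rho be then c1 else c2) rho mu bt
| SP_If_F be c1 c2 rho mu bt :
    spec_step (If be c1 c2) rho mu bt [DForce] [OBranch (beval rho be)]
              (if beval rho be then c2 else c1) rho mu true
| SP_While be c rho mu bt :
    spec_step (While be c) rho mu bt [] []
              (If be (Seq c (While be c)) Skip) rho mu bt
| SP_ARead x a ie i rho mu bt :
    i = aeval rho ie -> i < length (mu a) ->
    spec_step (ARead x a ie) rho mu bt [DStep] [ORead a i] Skip
              (upd rho x (nth i (mu a) 0)) mu bt
| SP_ARead_U x a ie i a' j rho mu :
    i = aeval rho ie -> length (mu a) <= i -> j < length (mu a') ->
    spec_step (ARead x a ie) rho mu true [DLoad a' j] [ORead a i] Skip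
              (upd rho x (nth j (mu a') 0)) mu true
| SP_AWrite a ie e i rho mu bt :
    i = aeval rho ie -> i < length (mu a) ->
    spec_step (AWrite a ie e) rho mu bt [DStep] [OWrite a i] Skip
              rho (aupd mu a i (aeval rho e)) bt
| SP_AWrite_U a ie e i a' j rho mu :
    i = aeval rho ie -> length (mu a) <= i -> j < length (mu a') ->
    spec_step (AWrite a ie e) rho mu true [DStore a' j] [OWrite a i] Skip
              rho (aupd mu a' j (aeval rho e)) true.

Inductive multi_spec : com -> state -> astate -> bool -> list direction ->
                       list observation -> com -> state -> astate -> bool -> Prop :=
| MP_Refl c rho mu bt : multi_spec c rho mu bt [] [] c rho mu bt
| MP_Trans c1 rho1 mu1 bt1 ds1 os1 c2 rho2 mu2 bt2 ds2 os2 c3 rho3 mu3 bt3 :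
    spec_step c1 rho1 mu1 bt1 ds1 os1 c2 rho2 mu2 bt2 ->
    multi_spec c2 rho2 mu2 bt2 ds2 os2 c3 rho3 mu3 bt3 ->
    multi_spec c1 rho1 mu1 bt1 (ds1 ++ ds2) (os1 ++ os2) c3 rho3 mu3 bt3.

Definition prefix {A : Type} (l1 l2 : list A) : Prop := exists l, l2 = l1 ++ l.

Definition seq_same_obs (c1 : com) (rho1 : state) (mu1 : astate)
                        (c2 : com) (rho2 : state) (mu2 : astate) : Prop :=
  forall O1 O2 c1' rho1' mu1' c2' rho2' mu2',
    multi_seq c1 rho1 mu1 O1 c1' rho1' mu1' ->
    multi_seq c2 rho2 mu2 O2 c2' rho2' mu2' ->
    prefix O1 O2 \/ prefix O2 O1.

Definition spec_same_obs (c1 : com) (rho1 : state) (mu1 : astate) (bt1 : bool)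
                         (c2 : com) (rho2 : state) (mu2 : astate) (bt2 : bool) : Prop :=
  forall D O1 O2 c1' rho1' mu1' bt1' c2' rho2' mu2' bt2',
    multi_spec c1 rho1 mu1 bt1 D O1 c1' rho1' mu1' bt1' ->
    multi_spec c2 rho2 mu2 bt2 D O2 c2' rho2' mu2' bt2' ->
    O1 = O2.

(* ---------- Labels (true = public, false = secret) ---------- *)
Definition label := bool.
Definition join (l1 l2 : label) : label := l1 && l2.
Definition can_flow (l1 l2 : label) : Prop := l2 = true -> l1 = true.

Definition label_of_aexp (P : var -> label) (e : aexp) : label := forallb P (avars e).
Definition label_of_bexp (P : var -> label) (be : bexp) : label := forallb P (bvars be).

Definition pub_equiv (P : var -> label) (rho1 rho2 : state) : Prop :=
  forall x, P x = true -> rho1 x = rho2 x.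

Definition apub_equiv (PA : arr -> label) (mu1 mu2 : astate) : Prop :=
  forall a, PA a = true ->
    length (mu1 a) = length (mu2 a) /\
    (forall i, i < length (mu1 a) -> nth i (mu1 a) 0 = nth i (mu2 a) 0).

Inductive well_typed (P : var -> label) (PA : arr -> label) : label -> com -> Prop :=
| WT_Skip pc : well_typed P PA pc Skip
| WT_Asgn pc x e :
    can_flow (join pc (label_of_aexp P e)) (P x) ->
    well_typed P PA pc (Asgn x e)
| WT_Seq pc c1 c2 :
    well_typed P PA pc c1 -> well_typed P PA pc c2 ->
    well_typed P PA pc (Seq c1 c2)
| WT_If pc be c1 c2 :
    well_typed P PA (join pc (label_of_bexp P be)) c1 ->
    well_typed P PA (join pc (label_of_bexp P be)) c2 ->
    well_typed P PA pc (If be c1 c2)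
| WT_While pc be c :
    well_typed P PA (join pc (label_of_bexp P be)) c ->
    well_typed P PA pc (While be c)
| WT_ARead pc x a i :
    can_flow (join (join pc (label_of_aexp P i)) (PA a)) (P x) ->
    well_typed P PA pc (ARead x a i)
| WT_AWrite pc a i e :
    can_flow (join (join pc (label_of_aexp P i)) (label_of_aexp P e)) (PA a) ->
    well_typed P PA pc (AWrite a i e).

Fixpoint index_slh (B : bexp -> bexp) (R : var -> aexp -> aexp)
                   (W : aexp -> aexp -> aexp) (c : com) : com :=
  match c with
  | Skip => Skip
  | Asgn x e => Asgn x e
  | Seq c1 c2 => Seq (index_slh B R W c1) (index_slh B R W c2)
  | If be c1 c2 =>
      If (B be)
         (Seq (Asgn msf (ACTIf (B be) (AId msf) (ANum 1))) (index_slh B R W c1))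
         (Seq (Asgn msf (ACTIf (B be) (ANum 1) (AId msf))) (index_slh B R W c2))
  | While be c1 =>
      Seq (While (B be)
                 (Seq (Asgn msf (ACTIf (B be) (AId msf) (ANum 1))) (index_slh B R W c1)))
          (Asgn msf (ACTIf (B be) (ANum 1) (AId msf)))
  | ARead x a i => ARead x a (R x i)
  | AWrite a i e => AWrite a (W i e) e
  end.

Definition mask (i : aexp) : aexp :=
  ACTIf (BCmp Nat.eqb (AId msf) (ANum 1)) (ANum 0) i.

Definition fislh_B (P : var -> label) (be : bexp) : bexp :=
  if label_of_bexp P be then be
  else BBin andb (BCmp Nat.eqb (AId msf) (ANum 0)) be.

Definition fislh_R (P : var -> label) (x : var) (i : aexp) : aexp :=
  if P x || negb (label_of_aexp P i) then mask i else i.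

Definition fislh_W (P : var -> label) (i e : aexp) : aexp :=
  if negb (label_of_aexp P e) || negb (label_of_aexp P i) then mask i else i.

Definition fislh (P : var -> label) (c : com) : com :=
  index_slh (fislh_B P) (fislh_R P) (fislh_W P) c.

(* Main.v *)
Require Import Defs.
From Stdlib Require Import String List Bool Arith Lia FunctionalExtensionality.
Import ListNotations.

Notation FL P c := (index_slh (fislh_B P) (fislh_R P) (fislh_W P) c).
Notation A1 P be := (Asgn msf (ACTIf (fislh_B P be) (AId msf) (ANum 1))).
Notation A2 P be := (Asgn msf (ACTIf (fislh_B P be) (ANum 1) (AId msf))).
Notation WL P be c := (While (fislh_B P be) (Seq (A1 P be) (FL P c))).

Inductive ideal_step (P : var -> label) : com -> state -> astate -> bool -> list direction ->
  list observation -> com -> state -> astate -> bool -> Prop :=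
| I_Asgn x e rho mu bt :
    ideal_step P (Asgn x e) rho mu bt [] [] Skip (upd rho x (aeval rho e)) mu bt
| I_Seq c1 c1' c2 rho mu bt ds os rho' mu' bt' :
    ideal_step P c1 rho mu bt ds os c1' rho' mu' bt' ->
    ideal_step P (Seq c1 c2) rho mu bt ds os (Seq c1' c2) rho' mu' bt'
| I_SeqSkip c rho mu bt :
    ideal_step P (Seq Skip c) rho mu bt [] [] c rho mu bt
| I_If be c1 c2 rho mu bt :
    ideal_step P (If be c1 c2) rho mu bt [DStep] [OBranch (beval rho (fislh_B P be))]
      (if beval rho (fislh_B P be) then c1 else c2) rho mu bt
| I_If_F be c1 c2 rho mu bt :
    ideal_step P (If be c1 c2) rho mu bt [DForce] [OBranch (beval rho (fislh_B P be))]
      (if beval rho (fislh_B P be) then c2 else c1) (upd rho msf 1) mu true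
| I_While be c rho mu bt :
    ideal_step P (While be c) rho mu bt [] [] (If be (Seq c (While be c)) Skip) rho mu bt
| I_ARead x a ie i rho mu bt :
    i = aeval rho (fislh_R P x ie) -> i < length (mu a) ->
    ideal_step P (ARead x a ie) rho mu bt [DStep] [ORead a i] Skip
      (upd rho x (nth i (mu a) 0)) mu bt
| I_ARead_U x a ie i a' j rho mu :
    i = aeval rho (fislh_R P x ie) -> length (mu a) <= i -> j < length (mu a') ->
    ideal_step P (ARead x a ie) rho mu true [DLoad a' j] [ORead a i] Skip
      (upd rho x (nth j (mu a') 0)) mu true
| I_AWrite a ie e i rho mu bt :
    i = aeval rho (fislh_W P ie e) -> i < length (mu a) ->
    ideal_step P (AWrite a ie e) rho mu bt [DStep] [OWrite a i] Skip
      rho (aupd mu a i (aeval rho e)) bt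
| I_AWrite_U a ie e i a' j rho mu :
    i = aeval rho (fislh_W P ie e) -> length (mu a) <= i -> j < length (mu a') ->
    ideal_step P (AWrite a ie e) rho mu true [DStore a' j] [OWrite a i] Skip
      rho (aupd mu a' j (aeval rho e)) true.

Inductive multi_ideal (P : var -> label) : com -> state -> astate -> bool -> list direction ->
  list observation -> com -> state -> astate -> bool -> Prop :=
| MI_Refl c rho mu bt : multi_ideal P c rho mu bt [] [] c rho mu bt
| MI_Trans c1 rho1 mu1 bt1 ds1 os1 c2 rho2 mu2 bt2 ds2 os2 c3 rho3 mu3 bt3 :
    ideal_step P c1 rho1 mu1 bt1 ds1 os1 c2 rho2 mu2 bt2 ->
    multi_ideal P c2 rho2 mu2 bt2 ds2 os2 c3 rho3 mu3 bt3 ->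
    multi_ideal P c1 rho1 mu1 bt1 (ds1 ++ ds2) (os1 ++ os2) c3 rho3 mu3 bt3.

Inductive sim (P : var -> label) : com -> state -> com -> state -> Prop :=
| sim_skip0 rho : sim P Skip rho Skip rho
| sim_asgn x e rho : sim P (Asgn x e) rho (Asgn x e) rho
| sim_read x a i rho : sim P (ARead x a (fislh_R P x i)) rho (ARead x a i) rho
| sim_write a i e rho : sim P (AWrite a (fislh_W P i e) e) rho (AWrite a i e) rho
| sim_if be c1 c2 rho :
    sim P (If (fislh_B P be) (Seq (A1 P be) (FL P c1)) (Seq (A2 P be) (FL P c2))) rho
          (If be c1 c2) rho
| sim_while be c rho : sim P (Seq (WL P be c) (A2 P be)) rho (While be c) rho
| sim_seq t1 s1 c2 rt rs : sim P t1 rt s1 rs -> sim P (Seq t1 (FL P c2)) rt (Seq s1 c2) rs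
| sim_pend e t s rt rs :
    sim P t (upd rt msf (aeval rt e)) s rs -> sim P (Seq (Asgn msf e) t) rt s rs
| sim_pend_last e rt : sim P (Asgn msf e) rt Skip (upd rt msf (aeval rt e))
| sim_skip t s rt rs : sim P t rt s rs -> sim P (Seq Skip t) rt s rs
| sim_loopif be c rho :
    sim P (Seq (If (fislh_B P be) (Seq (Seq (A1 P be) (FL P c)) (WL P be c)) Skip) (A2 P be)) rho
          (If be (Seq c (While be c)) Skip) rho
| sim_loopbody t s be c rt rs :
    sim P t rt s rs -> sim P (Seq (Seq t (WL P be c)) (A2 P be)) rt (Seq s (While be c)) rs.

Lemma upd_same : forall rho x, upd rho x (rho x) = rho.
Proof.
  intros rho x; apply functional_extensionality; intro y; unfold upd.
  destruct (String.eqb x y) eqn:E; auto. apply String.eqb_eq in E; subst; auto.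
Qed.

Lemma sim_fl P : forall c rho, sim P (FL P c) rho c rho.
Proof.
  induction c; intros; simpl; try constructor; auto.
Qed.

Lemma sim_pend' P : forall e t s rt rs rt', sim P t rt' s rs -> rt' = upd rt msf (aeval rt e) ->
  sim P (Seq (Asgn msf e) t) rt s rs.
Proof. intros; subst; constructor; auto. Qed.
Lemma sim_pend_last' P : forall e rt rs, rs = upd rt msf (aeval rt e) -> sim P (Asgn msf e) rt Skip rs.
Proof. intros; subst; constructor. Qed.

Ltac dv P := match goal with |- context [beval ?r (fislh_B P ?b)] =>
  let Hv := fresh "Hv" in destruct (beval r (fislh_B P b)) eqn:Hv end.
Ltac fin := simpl; match goal with H : beval _ _ = _ |- _ => rewrite H end;
  try rewrite upd_same; reflexivity.

Lemma sim_step P : forall tc rt sc rs, sim P tc rt sc rs ->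
  forall mu bt d o tc' rt' mu' bt', spec_step tc rt mu bt d o tc' rt' mu' bt' ->
  (exists sc' rs', ideal_step P sc rs mu bt d o sc' rs' mu' bt' /\ sim P tc' rt' sc' rs') \/
  (d = [] /\ o = [] /\ mu' = mu /\ bt' = bt /\ sim P tc' rt' sc rs).
Proof.
  intros tc rt sc rs H; induction H; intros mu0 bt0 d0 o0 tc' rt' mu' bt' Hs.
  - inversion Hs.
  - inversion Hs; subst. left. do 2 eexists; split; [constructor| constructor].
  - inversion Hs; subst; left; do 2 eexists; (split; [econstructor; eauto| constructor]).
  - inversion Hs; subst; left; do 2 eexists; (split; [econstructor; eauto| constructor]).
  - inversion Hs; subst; left; do 2 eexists; (split; [econstructor; eauto|]);
      dv P; (eapply sim_pend'; [apply sim_fl| fin]).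
  - inversion Hs; subst.
    + match goal with Hx : spec_step (While _ _) _ _ _ _ _ _ _ _ _ |- _ => inversion Hx; subst end.
      left. do 2 eexists; split; [constructor|]. constructor.
  - inversion Hs; subst.
    + match goal with Hx : spec_step t1 _ _ _ _ _ _ _ _ _ |- _ =>
        destruct (IHsim _ _ _ _ _ _ _ _ Hx) as [[sc' [rs' [Hi Hsim]]] | [-> [-> [-> [-> Hsim]]]]] end.
      * left. do 2 eexists; split; [constructor; eauto| constructor; auto].
      * right. repeat split; auto. constructor; auto.
    + inversion H; subst. left. do 2 eexists; split; [constructor| apply sim_fl].
  - inversion Hs; subst.
    + match goal with Hx : spec_step (Asgn _ _) _ _ _ _ _ _ _ _ _ |- _ => inversion Hx; subst end.
      right. repeat split; auto. constructor. auto.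
  - inversion Hs; subst. right. repeat split; auto. constructor.
  - inversion Hs; subst.
    + match goal with Hx : spec_step Skip _ _ _ _ _ _ _ _ _ |- _ => inversion Hx end.
    + right. repeat split; auto.
  - inversion Hs; subst.
    + match goal with Hx : spec_step (If _ _ _) _ _ _ _ _ _ _ _ _ |- _ => inversion Hx; subst end;
        left; do 2 eexists; (split; [econstructor; eauto|]); dv P.
      * apply sim_loopbody. eapply sim_pend'; [apply sim_fl| fin].
      * apply sim_skip. apply sim_pend_last'. fin.
      * apply sim_skip. apply sim_pend_last'. fin.
      * apply sim_loopbody. eapply sim_pend'; [apply sim_fl| fin].
  - inversion Hs; subst.
    + match goal with Hx : spec_step (Seq _ _) _ _ _ _ _ _ _ _ _ |- _ => inversion Hx; subst end.
      * match goal with Hx : spec_step t _ _ _ _ _ _ _ _ _ |- _ =>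
        destruct (IHsim _ _ _ _ _ _ _ _ Hx) as [[sc' [rs' [Hi Hsim]]] | [-> [-> [-> [-> Hsim]]]]] end.
        -- left. do 2 eexists; split; [constructor; eauto| constructor; auto].
        -- right. repeat split; auto. constructor; auto.
      * inversion H; subst. left. do 2 eexists; split; [constructor| constructor].
Qed.

Lemma sim_multi P : forall tc rt mu bt D O tc' rt' mu' bt',
  multi_spec tc rt mu bt D O tc' rt' mu' bt' -> forall sc rs, sim P tc rt sc rs ->
  exists sc' rs', multi_ideal P sc rs mu bt D O sc' rs' mu' bt'.
Proof.
  induction 1; intros sc rs Hs.
  - do 2 eexists; constructor.
  - destruct (sim_step P _ _ _ _ Hs _ _ _ _ _ _ _ _ H) as [[sc' [rs' [Hi Hsim]]] | [-> [-> [-> [-> Hsim]]]]].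
    + destruct (IHmulti_spec _ _ Hsim) as [sc'' [rs'' Hm]]. do 2 eexists. econstructor; eauto.
    + simpl. eauto.
Qed.
Scheme aexp_mind := Induction for aexp Sort Prop with bexp_mind := Induction for bexp Sort Prop.
Combined Scheme aexp_bexp_mind from aexp_mind, bexp_mind.

Lemma eval_pub P r1 r2 : pub_equiv P r1 r2 ->
  (forall e, forallb P (avars e) = true -> aeval r1 e = aeval r2 e) /\
  (forall be, forallb P (bvars be) = true -> beval r1 be = beval r2 be).
Proof.
  intro H. apply aexp_bexp_mind; simpl; intros; 
    repeat match goal with Hx : forallb _ (_ ++ _) = true |- _ => rewrite forallb_app in Hx; apply andb_prop in Hx; destruct Hx end;
    repeat match goal with Hx : ?A = true -> _ = _, Hy : ?A = true |- _ => rewrite (Hx Hy); clear Hx end; auto.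
  apply H. destruct (P x); simpl in *; auto.
Qed.

Lemma upd_eq r x v : upd r x v x = v.
Proof. unfold upd. rewrite String.eqb_refl. auto. Qed.
Lemma upd_neq r x y v : x <> y -> upd r x v y = r y.
Proof. intro H. unfold upd. apply String.eqb_neq in H. rewrite H. auto. Qed.

Lemma pub_upd P r1 r2 x v1 v2 : pub_equiv P r1 r2 -> (P x = true -> v1 = v2) ->
  pub_equiv P (upd r1 x v1) (upd r2 x v2).
Proof.
  intros H Hv y Hy. destruct (String.eqb x y) eqn:E.
  - apply String.eqb_eq in E; subst. rewrite !upd_eq. auto.
  - apply String.eqb_neq in E. rewrite !upd_neq; auto.
Qed.

Lemma list_upd_length : forall l i v, length (list_upd l i v) = length l.
Proof. induction l; destruct i; simpl; auto. Qed.

Lemma aupd_length mu a i v a0 : length (aupd mu a i v a0) = length (mu a0).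
Proof. unfold aupd. destruct (String.eqb a a0) eqn:E; auto. apply String.eqb_eq in E; subst. apply list_upd_length. Qed.

Lemma apub_eq PA m1 m2 a : apub_equiv PA m1 m2 -> PA a = true -> m1 a = m2 a.
Proof.
  intros H Ha. destruct (H a Ha) as [Hl Hn]. apply nth_ext with 0 0; auto.
Qed.

Lemma apub_upd PA m1 m2 a i v1 v2 : apub_equiv PA m1 m2 -> (PA a = true -> v1 = v2) ->
  apub_equiv PA (aupd m1 a i v1) (aupd m2 a i v2).
Proof.
  intros H Hv a0 Ha0. unfold aupd. destruct (String.eqb a a0) eqn:E.
  - apply String.eqb_eq in E; subst. rewrite (apub_eq _ _ _ _ H Ha0), (Hv Ha0).
    split; auto.
  - apply H; auto.
Qed.

Lemma wt_mono P PA : forall pc c, well_typed P PA pc c ->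
  forall pc', (pc = true -> pc' = true) -> well_typed P PA pc' c.
Proof.
  induction 1; intros pc' Hp; constructor; unfold can_flow, join in *; auto;
    try (intros Hy; specialize (H Hy));
    try (apply IHwell_typed1 || apply IHwell_typed2 || apply IHwell_typed);
    repeat match goal with Hx : (_ && _)%bool = true |- _ => apply andb_prop in Hx; destruct Hx end;
    try (intros; repeat match goal with Hx : (_ && _)%bool = true |- _ => apply andb_prop in Hx; destruct Hx end);
    repeat match goal with Hx : ?a = true |- _ => rewrite Hx end;
    try rewrite (Hp eq_refl); auto.
  all: try (rewrite Hp; auto; fail).
Qed.

Lemma multi_seq_lift : forall c rho mu O c' rho' mu', multi_seq c rho mu O c' rho' mu' ->
  forall c2, multi_seq (Seq c c2) rho mu O (Seq c' c2) rho' mu'.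
Proof. induction 1; intros; [constructor| econstructor; [constructor; eauto| eauto]]. Qed.

Lemma sso_seq c1 c2 r1 m1 r2 m2 : seq_same_obs (Seq c1 c2) r1 m1 (Seq c1 c2) r2 m2 ->
  seq_same_obs c1 r1 m1 c1 r2 m2.
Proof. intros H O1 O2 ? ? ? ? ? ? H1 H2. eapply H; apply multi_seq_lift; eauto. Qed.

Lemma sso_step c r1 m1 r2 m2 o c1 r1' m1' c2 r2' m2' :
  seq_same_obs c r1 m1 c r2 m2 ->
  seq_step c r1 m1 o c1 r1' m1' -> seq_step c r2 m2 o c2 r2' m2' ->
  seq_same_obs c1 r1' m1' c2 r2' m2'.
Proof.
  intros H S1 S2 O1 O2 ? ? ? ? ? ? H1 H2.
  destruct (H _ _ _ _ _ _ _ _ (MS_Trans _ _ _ _ _ _ _ _ _ _ _ S1 H1) (MS_Trans _ _ _ _ _ _ _ _ _ _ _ S2 H2))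
    as [[l Hl] | [l Hl]].
  - left. exists l. rewrite <- app_assoc in Hl. apply app_inv_head in Hl. auto.
  - right. exists l. rewrite <- app_assoc in Hl. apply app_inv_head in Hl. auto.
Qed.

Lemma sso_one c r1 m1 r2 m2 x y c1 r1' m1' c2 r2' m2' :
  seq_same_obs c r1 m1 c r2 m2 ->
  seq_step c r1 m1 [x] c1 r1' m1' -> seq_step c r2 m2 [y] c2 r2' m2' -> x = y.
Proof.
  intros H S1 S2.
  assert (M1 := MS_Trans _ _ _ _ _ _ _ _ _ _ _ S1 (MS_Refl c1 r1' m1')).
  assert (M2 := MS_Trans _ _ _ _ _ _ _ _ _ _ _ S2 (MS_Refl c2 r2' m2')).
  destruct (H _ _ _ _ _ _ _ _ M1 M2) as [[l Hl] | [l Hl]]; simpl in Hl; inversion Hl; auto.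
Qed.

Fixpoint und (c : com) : bool :=
  match c with
  | Asgn _ _ | While _ _ => true
  | Seq c1 _ => match c1 with Skip => true | _ => und c1 end
  | _ => false
  end.

Lemma ideal_shape P : forall c r m bt d o c' r' m' bt', ideal_step P c r m bt d o c' r' m' bt' ->
  (d = [] /\ o = [] /\ und c = true) \/ (exists x y, d = [x] /\ o = [y] /\ und c = false).
Proof.
  induction 1; simpl; eauto 10.
  destruct IHideal_step as [[? [? ?]] | [x [y [? [? ?]]]]]; destruct c1; subst; eauto 10;
    inversion H.
Qed.

Lemma ideal_bt P : forall c r m bt d o c' r' m' bt', ideal_step P c r m bt d o c' r' m' bt' ->
  bt = true -> bt' = true.
Proof. induction 1; auto. Qed.

Lemma multi_len P : forall c r m bt D O c' r' m' bt', multi_ideal P c r m bt D O c' r' m' bt' ->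
  length D = length O.
Proof.
  induction 1; auto. rewrite !app_length.
  destruct (ideal_shape _ _ _ _ _ _ _ _ _ _ _ H) as [[-> [-> _]] | [x [y [-> [-> _]]]]]; simpl; auto.
Qed.

Lemma B_msf0 P r be : r msf = 0 -> beval r (fislh_B P be) = beval r be.
Proof. intro H. unfold fislh_B. destruct (label_of_bexp P be); simpl; auto. rewrite H; auto. Qed.
Lemma mask0 r i : r msf = 0 -> aeval r (mask i) = aeval r i.
Proof. intro H. simpl. rewrite H. auto. Qed.
Lemma R_msf0 P r x i : r msf = 0 -> aeval r (fislh_R P x i) = aeval r i.
Proof. intro H. unfold fislh_R. destruct (_ || _)%bool; auto. apply mask0; auto. Qed.
Lemma W_msf0 P r i e : r msf = 0 -> aeval r (fislh_W P i e) = aeval r i.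
Proof. intro H. unfold fislh_W. destruct (_ || _)%bool; auto. apply mask0; auto. Qed.

Lemma ideal_seq P : forall c r m bt d o c' r' m' bt', ideal_step P c r m bt d o c' r' m' bt' ->
  bt = false -> bt' = false -> r msf = 0 -> seq_step c r m o c' r' m'.
Proof.
  induction 1; intros Hb Hb' Hr; subst; try discriminate; try (constructor; auto; fail).
  - rewrite B_msf0 by auto. constructor.
  - econstructor; eauto. rewrite R_msf0; auto.
  - econstructor; eauto. rewrite W_msf0; auto.
Qed.

Definition Inv0 P PA c r1 m1 r2 m2 (bt : bool) :=
  well_typed P PA true c /\ ~ In msf (used_vars c) /\ pub_equiv P r1 r2 /\
  r1 msf = (if bt then 1 else 0) /\ r2 msf = (if bt then 1 else 0) /\
  apub_equiv PA m1 m2 /\ (forall a, 0 < length (m1 a)) /\ (forall a, 0 < length (m2 a)).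

Lemma guard_eq P PA be c1 c2 r1 m1 r2 m2 bt : Inv0 P PA (If be c1 c2) r1 m1 r2 m2 bt ->
  (bt = false -> seq_same_obs (If be c1 c2) r1 m1 (If be c1 c2) r2 m2) ->
  beval r1 (fislh_B P be) = beval r2 (fislh_B P be).
Proof.
  intros [Hwt [Hu [Hp [H1 [H2 _]]]]] Hs. destruct bt.
  - unfold fislh_B. destruct (label_of_bexp P be) eqn:L.
    + apply (eval_pub P r1 r2 Hp). apply L.
    + simpl. rewrite H1, H2. auto.
  - rewrite !B_msf0 by auto.
    assert (X := sso_one _ _ _ _ _ _ _ _ _ _ _ _ _ (Hs eq_refl) (SS_If be c1 c2 r1 m1) (SS_If be c1 c2 r2 m2)).
    inversion X; auto.
Qed.

Lemma ridx_eq P r1 r2 x i : pub_equiv P r1 r2 -> r1 msf = 1 -> r2 msf = 1 ->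
  aeval r1 (fislh_R P x i) = aeval r2 (fislh_R P x i).
Proof.
  intros Hp H1 H2. unfold fislh_R. destruct (P x || negb (label_of_aexp P i))%bool eqn:E.
  - simpl. rewrite H1, H2. auto.
  - apply orb_false_elim in E. destruct E as [_ E]. apply negb_false_iff in E.
    apply (eval_pub P r1 r2 Hp). apply E.
Qed.

Lemma widx_eq P r1 r2 i e : pub_equiv P r1 r2 -> r1 msf = 1 -> r2 msf = 1 ->
  aeval r1 (fislh_W P i e) = aeval r2 (fislh_W P i e).
Proof.
  intros Hp H1 H2. unfold fislh_W. destruct (negb (label_of_aexp P e) || negb (label_of_aexp P i))%bool eqn:E.
  - simpl. rewrite H1, H2. auto.
  - apply orb_false_elim in E. destruct E as [_ E]. apply negb_false_iff in E.
    apply (eval_pub P r1 r2 Hp). apply E.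
Qed.

Lemma R_pub P r x i : P x = true -> r msf = 1 -> aeval r (fislh_R P x i) = 0.
Proof. intros Hx H. unfold fislh_R. rewrite Hx. simpl. rewrite H. auto. Qed.

Lemma W_unmasked P r i e : r msf = 1 -> aeval r (fislh_W P i e) <> 0 ->
  label_of_aexp P e = true /\ label_of_aexp P i = true.
Proof.
  intros H Hn. unfold fislh_W in Hn.
  destruct (label_of_aexp P e), (label_of_aexp P i); simpl in Hn; auto; rewrite H in Hn; simpl in Hn; congruence.
Qed.

Ltac inv0 H := destruct H as [Hwt [Hu [Hp [Hm1 [Hm2 [Ha [Hl1 Hl2]]]]]]].

Lemma mkInv0 P PA c r1 m1 r2 m2 (bt : bool) : well_typed P PA true c -> ~ In msf (used_vars c) ->
  pub_equiv P r1 r2 -> r1 msf = (if bt then 1 else 0) -> r2 msf = (if bt then 1 else 0) ->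
  apub_equiv PA m1 m2 -> (forall a, 0 < length (m1 a)) -> (forall a, 0 < length (m2 a)) ->
  Inv0 P PA c r1 m1 r2 m2 bt.
Proof. unfold Inv0; tauto. Qed.

Ltac fin3 := split; [reflexivity|split;[reflexivity|split;[reflexivity|apply mkInv0]]].

Lemma pair_step P PA : forall c r1 m1 bt d o1 c1 r1' m1' b1,
  ideal_step P c r1 m1 bt d o1 c1 r1' m1' b1 ->
  forall r2 m2 o2 c2 r2' m2' b2, ideal_step P c r2 m2 bt d o2 c2 r2' m2' b2 ->
  Inv0 P PA c r1 m1 r2 m2 bt -> (bt = false -> seq_same_obs c r1 m1 c r2 m2) ->
  o1 = o2 /\ c1 = c2 /\ b1 = b2 /\ Inv0 P PA c1 r1' m1' r2' m2' b1.
Proof.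
  induction 1; intros r2 m2 o2 cc r2' m2' b2 S2 HI Hs.
  -
    inversion S2; subst. inv0 HI. inversion Hwt; subst.
    assert (Hx : x <> msf) by (intro; subst; apply Hu; simpl; auto).
    fin3; auto.
    + constructor.
    + apply pub_upd; auto. intro HPx. unfold can_flow, join in *. simpl in *.
      apply (eval_pub P rho r2 Hp). auto.
    + rewrite upd_neq; auto.
    + rewrite upd_neq; auto.
  -
    inversion S2; subst.
    + inv0 HI. inversion Hwt; subst. simpl in Hu.
      assert (HI1 : Inv0 P PA c1 rho mu r2 m2 bt).
      { apply mkInv0; auto. intro; apply Hu; apply in_or_app; auto. }
      assert (Hs1 : bt = false -> seq_same_obs c1 rho mu c1 r2 m2).
      { intro E. apply sso_seq with c2. auto. }
      match goal with Hx : ideal_step P c1 r2 _ _ _ _ _ _ _ _ |- _ => rename Hx into S2' end.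
      destruct (IHideal_step _ _ _ _ _ _ _ S2' HI1 Hs1) as [-> [-> [-> HI']]].
      clear Hp Hm1 Hm2 Ha Hl1 Hl2; rename Hwt into Hwt0; rename Hu into Hu00.
      inv0 HI'. fin3; auto.
      * constructor; auto.
      * simpl. intro Hin. apply in_app_or in Hin. destruct Hin; [apply Hu|apply Hu00]; auto.
        apply in_or_app; auto.
    + inversion H.
  -
    inversion S2; subst.
    + match goal with Hx : ideal_step _ Skip _ _ _ _ _ _ _ _ _ |- _ => inversion Hx end.
    + inv0 HI. inversion Hwt; subst. fin3; auto.
  -
    inversion S2; subst.
    assert (G := guard_eq _ _ _ _ _ _ _ _ _ _ HI Hs). rewrite <- G.
    inv0 HI. inversion Hwt; subst. simpl in Hu. fin3; auto.
    + destruct (beval rho (fislh_B P be)); eapply wt_mono; eauto.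
    + intro Hin. apply Hu. apply in_or_app. right. apply in_or_app.
      destruct (beval rho (fislh_B P be)); auto.
  -
    inversion S2; subst.
    assert (G := guard_eq _ _ _ _ _ _ _ _ _ _ HI Hs). rewrite <- G.
    inv0 HI. inversion Hwt; subst. simpl in Hu. fin3; auto.
    all: try (destruct (beval rho (fislh_B P be)); eapply wt_mono; eauto; fail).
    all: try (intro Hin; apply Hu; apply in_or_app; right; apply in_or_app;
      destruct (beval rho (fislh_B P be)); auto; fail).
    all: try (apply pub_upd; auto; fail).
    all: try apply upd_eq.
  -
    inversion S2; subst. inv0 HI. inversion Hwt; subst. simpl in Hu. fin3; auto.
    + constructor; constructor; auto. constructor. eapply wt_mono; eauto.
      intro E. unfold join in *. destruct (label_of_bexp P be); auto.
    + simpl. intro Hin. apply Hu. repeat (apply in_app_or in Hin; destruct Hin as [Hin|Hin]);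
        auto using in_or_app; simpl in Hin; tauto.
  -
    inversion S2; subst.
    inv0 HI. inversion Hwt; subst.
    assert (Hx : x <> msf) by (intro; subst; apply Hu; simpl; auto).
    match goal with Hq : pub_equiv P _ ?r |- _ => assert (Ei : aeval rho (fislh_R P x ie) = aeval r (fislh_R P x ie)) end.
    { match goal with Hs0 : ?b = false -> _ |- _ => destruct b end.
      - apply ridx_eq; auto.
      - assert (X := sso_one _ _ _ _ _ _ _ _ _ _ _ _ _ (Hs eq_refl)
          (SS_ARead x a ie _ rho mu (R_msf0 _ _ _ _ Hm1) H0)
          (SS_ARead x a ie _ _ _ (R_msf0 _ _ _ _ Hm2) ltac:(eassumption))).
        inversion X; auto. }
    rewrite <- Ei. fin3; try (solve [auto]).
    all: try (constructor; fail).
    all: try (rewrite upd_neq; auto; fail).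
    apply pub_upd; auto. intro HPx.
    match goal with Hc : can_flow _ _ |- _ => unfold can_flow, join in Hc; simpl in Hc;
      specialize (Hc HPx); apply andb_prop in Hc; destruct Hc as [_ HPA] end.
    rewrite (apub_eq _ _ _ _ Ha HPA). auto.
  -
    inversion S2; subst.
    inv0 HI.
    assert (Hx : x <> msf) by (intro; subst; apply Hu; simpl; auto).
    assert (Ei := ridx_eq P _ _ x ie Hp Hm1 Hm2). rewrite <- Ei.
    assert (HPx : P x = false).
    { destruct (P x) eqn:E; auto. rewrite (R_pub _ _ _ _ E Hm1) in H0. specialize (Hl1 a). lia. }
    fin3; try (solve [auto]).
    all: try (constructor; fail).
    all: try (rewrite upd_neq; auto; fail).
    apply pub_upd; auto. congruence.
  -
    inversion S2; subst.
    inv0 HI. inversion Hwt; subst.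
    match goal with Hq : pub_equiv P _ ?r |- _ => assert (Ei : aeval rho (fislh_W P ie e) = aeval r (fislh_W P ie e)) end.
    { match goal with Hs0 : ?b = false -> _ |- _ => destruct b end.
      - apply widx_eq; auto.
      - assert (X := sso_one _ _ _ _ _ _ _ _ _ _ _ _ _ (Hs eq_refl)
          (SS_AWrite a ie e _ rho mu (W_msf0 _ _ _ _ Hm1) H0)
          (SS_AWrite a ie e _ _ _ (W_msf0 _ _ _ _ Hm2) ltac:(eassumption))).
        inversion X; auto. }
    rewrite <- Ei. fin3; try (solve [auto]).
    all: try (constructor; fail).
    all: try (intro a0; rewrite aupd_length; auto; fail).
    apply apub_upd; auto. intro HPA.
    match goal with Hc : can_flow _ _ |- _ => unfold can_flow, join in Hc; simpl in Hc;
      specialize (Hc HPA); apply andb_prop in Hc; destruct Hc as [_ He] end.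
    apply (eval_pub P _ _ Hp). auto.
  -
    inversion S2; subst.
    inv0 HI.
    assert (Ei := widx_eq P _ _ ie e Hp Hm1 Hm2). rewrite <- Ei.
    assert (Hn : aeval rho (fislh_W P ie e) <> 0) by (specialize (Hl1 a); lia).
    destruct (W_unmasked _ _ _ _ Hm1 Hn) as [He _].
    fin3; try (solve [auto]).
    all: try (constructor; fail).
    all: try (intro a0; rewrite aupd_length; auto; fail).
    apply apub_upd; auto. intros _. apply (eval_pub P _ _ Hp). auto.
Qed.

Lemma ideal_NI P PA : forall c r1 m1 bt D O1 c1 r1' m1' b1,
  multi_ideal P c r1 m1 bt D O1 c1 r1' m1' b1 ->
  forall r2 m2 O2 c2 r2' m2' b2, multi_ideal P c r2 m2 bt D O2 c2 r2' m2' b2 ->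
  Inv0 P PA c r1 m1 r2 m2 bt -> (bt = false -> seq_same_obs c r1 m1 c r2 m2) -> O1 = O2.
Proof.
  induction 1 as [c r m bt | c r1 m1 bt ds1 os1 c' r1' m1' bt' ds2 os2 c3 r3 m3 bt3 S1 M1 IH];
    intros r2 m2 O2 cc r2' m2' b2 M2 HI Hs.
  - apply multi_len in M2. destruct O2; simpl in *; congruence.
  - inversion M2 as [ | c0 r0 m0 bt0 d2 o2 c'' r2'' m2'' bt'' D2' O2' c4 r4 m4 bt4 S2 M2' ]; subst.
    + apply multi_len in M1.
      destruct ds1; [|discriminate]. destruct ds2; [|discriminate].
      destruct (ideal_shape _ _ _ _ _ _ _ _ _ _ _ S1) as [[_ [-> _]] | [x [y [E _]]]]; [|discriminate].
      destruct os2; simpl in *; congruence.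
    + destruct (ideal_shape _ _ _ _ _ _ _ _ _ _ _ S1) as [[-> [-> U1]] | [x [y [-> [-> U1]]]]];
      destruct (ideal_shape _ _ _ _ _ _ _ _ _ _ _ S2) as [[-> [-> U2]] | [x' [y' [-> [-> U2]]]]];
      try congruence.
      * simpl in *. subst.
        destruct (pair_step P PA _ _ _ _ _ _ _ _ _ _ S1 _ _ _ _ _ _ _ S2 HI Hs) as [_ [<- [<- HI']]].
        simpl. eapply IH; eauto.
        intro Eb. assert (bt = false) by (destruct bt; auto; assert (bt' = true) by (eapply ideal_bt; eauto); congruence).
        subst. destruct HI as [_ [_ [_ [Hm1 [Hm2 _]]]]].
        eapply sso_step; [apply Hs; auto | eapply ideal_seq; eauto | eapply ideal_seq; eauto].
      * match goal with Hx : [_] ++ _ = [_] ++ _ |- _ => simpl in Hx; inversion Hx; subst end.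
        destruct (pair_step P PA _ _ _ _ _ _ _ _ _ _ S1 _ _ _ _ _ _ _ S2 HI Hs) as [Eo [<- [<- HI']]].
        inversion Eo; subst. simpl. f_equal. eapply IH; eauto.
        intro Eb. assert (bt = false) by (destruct bt; auto; assert (bt' = true) by (eapply ideal_bt; eauto); congruence).
        subst. destruct HI as [_ [_ [_ [Hm1 [Hm2 _]]]]].
        eapply sso_step; [apply Hs; auto | eapply ideal_seq; eauto | eapply ideal_seq; eauto].
Qed.

Theorem theorem3p3 (P : var -> label) (PA : arr -> label) (c : com)
    (rho1 rho2 : state) (mu1 mu2 : astate) :
  ~ In msf (used_vars c) ->
  rho1 msf = 0 -> rho2 msf = 0 ->
  (forall a, 0 < length (mu1 a)) ->
  (forall a, 0 < length (mu2 a)) ->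
  well_typed P PA true c ->
  pub_equiv P rho1 rho2 ->
  apub_equiv PA mu1 mu2 ->
  seq_same_obs c rho1 mu1 c rho2 mu2 ->
  spec_same_obs (fislh P c) rho1 mu1 false (fislh P c) rho2 mu2 false.
Proof.
  intros Hu H1 H2 L1 L2 Hwt Hp Ha Hs D O1 O2 c1' r1' m1' b1' c2' r2' m2' b2' M1 M2.
  destruct (sim_multi P _ _ _ _ _ _ _ _ _ _ M1 c rho1 (sim_fl P c rho1)) as [s1 [rs1 I1]].
  destruct (sim_multi P _ _ _ _ _ _ _ _ _ _ M2 c rho2 (sim_fl P c rho2)) as [s2 [rs2 I2]].
  eapply (ideal_NI P PA); eauto.
  apply mkInv0; auto.
Qed.
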